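(* Let $n\ge2$ and let $\mathcal{I}^{(k)}_{CCZ}$ be the set of channels $\rho\mapsto U\rho U^\dagger$ with $U=H^{\otimes n}DH^{\otimes n}$, where $D$ is a product of gates from $\{Z,CZ,CCZ\}$ (acting on arbitrary qubits) containing at most $k$ $CCZ$ gates. There is an absolute constant $C$ such that for every sample $S=(z_1,\ldots,z_m)$ with $z_i\in\mathbb{F}_2^n\times\mathbb{F}_2^n$, \[ \hat{R}_S(\mathcal{F}(\mathcal{I}^{(k)}_{CCZ}))\le\frac{C\,(n^2+k\log n)^{1/2}}{\sqrt m}\max_{\Phi\in\mathcal{I}^{(k)}_{CCZ}}\|\vec f_\Phi\|_\infty . \]
   Context: $H$ is the Hadamard gate, $Z=\mathrm{diag}(1,-1)$, $CZ$ the controlled-$Z$ gate, $CCZ$ the doubly controlled-$Z$ gate on three qubits. For a channel $\Phi$ on $n$ qubits, $f_\Phi(x,y)=\mathrm{Tr}[\Phi(|x\rangle\langle x|)\,|y\rangle\langle y|]$ for $x,y\in\mathbb{F}_2^n$; $\mathcal{F}(\Omega)=\{f_\Phi:\Phi\in\Omega\}$; $\vec f_\Phi=(f_\Phi(z_1),\ldots,f_\Phi(z_m))$. Empirical Rademacher complexity: $\hat{R}_S(\mathcal{G})=\mathbb{E}_{\epsilon}[\sup_{g\in\mathcal{G}}\frac1m\sum_i\epsilon_i g(z_i)]$, $\epsilon_i$ i.i.d. uniform on $\{\pm1\}$. *)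

(* Defs.v *)
From HB Require Import structures.
From mathcomp Require Import all_boot all_order all_algebra.
From mathcomp Require Import all_classical all_reals.
From mathcomp Require Import exp.
Set Implicit Arguments. Unset Strict Implicit. Unset Printing Implicit Defensive.
Import Order.TTheory GRing.Theory Num.Theory.
Local Open Scope ring_scope.
Local Open Scope classical_set_scope.

(* Computational basis states of n qubits: x in F_2^n. *)
Definition basis (n : nat) := {ffun 'I_n -> bool}.

(* All gates involved (H, Z, CZ, CCZ) have real entries, so real matrices suffice;
   the adjoint of a real matrix is its transpose. *)
Definition op (R : realType) (n : nat) := basis n -> basis n -> R.

Section Ops.
Variables (R : realType) (n : nat).
Definition mmul (A B : op R n) : op R n := fun x y => \sum_(z : basis n) A x z * B z y.
Definition adj (A : op R n) : op R n := fun x y => A y x.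
Definition idop : op R n := fun x y => (x == y)%:R.
Definition trace (A : op R n) : R := \sum_(x : basis n) A x x.
Definition proj (x : basis n) : op R n := fun a b => ((a == x) && (b == x))%:R.

Definition had1 (a b : bool) : R := (-1) ^+ (a && b) / Num.sqrt 2.
(* H^{\otimes n}: Kronecker product entries are products of the factor entries *)
Definition hadn : op R n := fun x y => \prod_(i < n) had1 (x i) (y i).

Inductive gate := GZ of 'I_n | GCZ of 'I_n & 'I_n | GCCZ of 'I_n & 'I_n & 'I_n.
Definition gate_ok (g : gate) : bool :=
  match g with
  | GZ _ => true
  | GCZ i j => i != j
  | GCCZ i j l => [&& i != j, i != l & j != l]
  end.
Definition is_ccz (g : gate) : bool := if g is GCCZ _ _ _ then true else false.
Definition gphase (g : gate) (x : basis n) : R :=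
  match g with
  | GZ i => (-1) ^+ (x i)
  | GCZ i j => (-1) ^+ (x i && x j)
  | GCCZ i j l => (-1) ^+ [&& x i, x j & x l]
  end.
Definition gmat (g : gate) : op R n := fun x y => (x == y)%:R * gphase g x.
Definition circ (gs : seq gate) : op R n := foldr (fun g A => mmul (gmat g) A) idop gs.

Definition uchan (U : op R n) : op R n -> op R n := fun rho => mmul (mmul U rho) (adj U).

Definition I_CCZ (k : nat) : set (op R n -> op R n) :=
  [set Phi | exists gs : seq gate,
     [/\ all gate_ok gs, (count is_ccz gs <= k)%N &
         Phi = uchan (mmul (mmul hadn (circ gs)) hadn)]].

Definition fPhi (Phi : op R n -> op R n) (z : basis n * basis n) : R :=
  trace (mmul (Phi (proj z.1)) (proj z.2)).

Definition Fset (Omega : set (op R n -> op R n)) : set (basis n * basis n -> R) :=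
  [set f | exists2 Phi, Omega Phi & f = fPhi Phi].
End Ops.

(* empirical Rademacher complexity, eps uniform on {+-1}^m (eps_i = (-1)^(b_i)) *)
Definition rademacher (R : realType) (T : Type) (m : nat) (S : 'I_m -> T)
  (G : set (T -> R)) : R :=
  (2 ^+ m)^-1 * \sum_(b : {ffun 'I_m -> bool})
     sup [set (m%:R)^-1 * \sum_(i < m) (-1) ^+ (b i) * g (S i) | g in G].

Definition linf (R : realType) (T : Type) (m : nat) (S : 'I_m -> T) (f : T -> R) : R :=
  \big[Num.max/0]_(i < m) `|f (S i)|.

(* Main.v *)
Require Import Defs.
From HB Require Import structures.
From mathcomp Require Import all_boot all_order all_algebra.
From mathcomp Require Import all_classical all_reals.
From mathcomp Require Import sequences exp.
From mathcomp Require Import lra ring zify.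
Import Order.TTheory GRing.Theory Num.Theory.
Local Open Scope ring_scope.
Local Open Scope classical_set_scope.

Section M.
Variable R : realType.
Implicit Types x : R.

Lemma jensen_expR (I : finType) (F : I -> R) : (0 < #|I|)%N ->
  expR (#|I|%:R^-1 * \sum_i F i) <= #|I|%:R^-1 * \sum_i expR (F i).
Proof.
move=> hI.
set N : R := #|I|%:R; set c := N^-1 * _.
have hN : 0 < N by rewrite /N ltr0n.
have key : forall i, expR c * (1 + (F i - c)) <= expR (F i).
  move=> i; have -> : F i = c + (F i - c) by ring.
  rewrite expRD ler_wpM2l ?expR_ge0 //.
  have -> : c + (F i - c) - c = F i - c by ring.
  exact: expR_ge1Dx.
have : \sum_i expR c * (1 + (F i - c)) <= \sum_i expR (F i).
  by apply: ler_sum => i _; exact: key.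
have sc : \sum_(i : I) c = N * c by rewrite sumr_const -mulr_natl.
have s1 : \sum_(i : I) (1:R) = N by rewrite sumr_const.
rewrite -mulr_sumr big_split /= s1 big_split /= sumrN sc.
have -> : \sum_i F i = N * c by rewrite /c mulrA mulfV ?mul1r // gt_eqF.
have -> : N + (N * c - N * c) = N by ring.
by move=> h; rewrite ler_pdivlMl // mulrC.
Qed.


Lemma expR_le_quad x : x <= 1/2 -> expR x <= 1 + x + 2 * x ^+ 2.
Proof.
move=> hx.
have h1 : 0 < 1 - x by lra.
have h2 : 1 - x <= expR (- x) by have := expR_ge1Dx (- x); lra.
rewrite -[expR x]invrK -expRN.
apply: (@le_trans _ _ (1 - x)^-1).
  by rewrite lef_pV2 ?posrE ?expR_gt0.
rewrite -[(1-x)^-1]mul1r ler_pdivrMr //.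
have : 0 <= x ^+ 2 * (1 - 2 * x) by apply: mulr_ge0; [exact: sqr_ge0| lra].
nra.
Qed.

Lemma cosh_le x : (expR x + expR (- x)) / 2 <= expR (2 * x ^+ 2).
Proof.
have [hs|hl] := lerP `|x| (1/2).
  have hx1 : x <= 1/2 by have := ler_norm x; lra.
  have hx2 : - x <= 1/2 by have := ler_norm (- x); rewrite normrN; lra.
  have e1 := expR_le_quad _ hx1.
  have e2 := expR_le_quad _ hx2.
  have e3 := expR_ge1Dx (2 * x ^+ 2).
  rewrite sqrrN in e2.
  lra.
have ha : expR x <= expR `|x| by rewrite ler_expR ler_norm.
have hb : expR (- x) <= expR `|x| by rewrite ler_expR -normrN ler_norm.
have hc : expR `|x| <= expR (2 * x ^+ 2).
  rewrite ler_expR -real_normK ?num_real //.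
  have : 0 <= `|x| by [].
  nra.
lra.
Qed.

Lemma avg_exp_bound (m : nat) (a : 'I_m -> R) (lam M : R) : (0 < m)%N ->
  0 <= lam -> (forall i, `|a i| <= M) ->
  (2 ^+ m)^-1 * \sum_(b : {ffun 'I_m -> bool})
     expR (lam * (m%:R^-1 * \sum_(i < m) (-1) ^+ (b i) * a i))
  <= expR (2 * lam ^+ 2 * M ^+ 2 / m%:R).
Proof.
move=> hm hl hM.
set c := fun i => lam * m%:R^-1 * a i.
have e : forall b : {ffun 'I_m -> bool},
    expR (lam * (m%:R^-1 * \sum_(i < m) (-1) ^+ (b i) * a i))
    = \prod_(i < m) expR ((-1) ^+ (b i) * c i).
  move=> b; rewrite mulr_sumr mulr_sumr expR_sum; apply: eq_bigr => i _.
  by congr expR; rewrite /c; ring.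
rewrite (eq_bigr _ (fun b _ => e b)).
rewrite -(bigA_distr_bigA (fun (i : 'I_m) (j : bool) => expR ((-1) ^+ j * c i))) /=.
have -> : (2 ^+ m)^-1 = \prod_(i < m) (2 : R)^-1 by rewrite prodr_const card_ord exprVn.
rewrite -big_split /=.
apply: (@le_trans _ _ (\prod_(i < m) expR (2 * (lam * m%:R^-1 * M) ^+ 2))).
  apply: ler_prod => i _; rewrite big_bool /= expr1 expr0 mul1r mulN1r.
  apply/andP; split.
    by apply: mulr_ge0; [rewrite invr_ge0 | apply: addr_ge0; exact: expR_ge0].
  rewrite mulrC addrC; apply: (le_trans (cosh_le _)).
  rewrite ler_expR /c.
  have h1 : 0 <= lam * m%:R^-1 by apply: mulr_ge0; rewrite ?invr_ge0.
  have h2 := hM i.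
  have h3 : a i ^+ 2 <= M ^+ 2.
    rewrite -real_normK ?num_real //; have : 0 <= `|a i| by []. nra.
  rewrite !exprMn; have : 0 <= (lam * m%:R^-1) ^+ 2 by exact: sqr_ge0.
  rewrite exprMn; nra.
rewrite prodr_const card_ord -expRM_natl ler_expR.
have hm0 : m%:R != 0 :> R by rewrite pnatr_eq0 -lt0n.
by rewrite le_eqVlt; apply/orP; left; apply/eqP; field.
Qed.

Lemma massart (m : nat) (T : finType) (P : pred T) (a : T -> 'I_m -> R)
  (X : {ffun 'I_m -> bool} -> R) (M L : R) :
  (0 < m)%N -> (forall t i, P t -> `|a t i| <= M) ->
  (forall b : {ffun 'I_m -> bool}, exists2 t, P t & X b = m%:R^-1 * \sum_(i < m) (-1) ^+ (b i) * a t i) ->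
  ln (#|T|%:R) <= L -> 0 < L ->
  (2 ^+ m)^-1 * \sum_(b : {ffun 'I_m -> bool}) X b <= 3 * M * Num.sqrt (L / m%:R).
Proof.
move=> hm hM hX hL hL0.
have [t0 Pt0 _] := hX [ffun => false].
have hT : (0 < #|T|)%N by apply/card_gt0P; exists t0.
have hM0 : 0 <= M by apply: le_trans (hM t0 (Ordinal hm) Pt0).
set mu := (2 ^+ m)^-1 * \sum_(b : {ffun 'I_m -> bool}) X b.
have card2 : #|{ffun 'I_m -> bool}| = (2 ^ m)%N by rewrite card_ffun card_bool card_ord.
have step : forall lam, 0 < lam -> lam * mu <= L + 2 * lam ^+ 2 * M ^+ 2 / m%:R.
  move=> lam hl.
  set Q := 2 * lam ^+ 2 * M ^+ 2 / m%:R.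
  have J := @jensen_expR _ (fun b : {ffun 'I_m -> bool} => lam * X b).
  rewrite card2 natrX expn_gt0 /= in J.
  have J' := J isT; clear J.
  rewrite -mulr_sumr in J'.
  have e1 : lam * mu = (2 ^+ m)^-1 * (lam * \sum_(b : {ffun 'I_m -> bool}) X b) by rewrite /mu; ring.
  have B1 : \sum_(b : {ffun 'I_m -> bool}) expR (lam * X b) <=
     \sum_(b : {ffun 'I_m -> bool}) \sum_(t | P t) expR (lam * (m%:R^-1 * \sum_(i < m) (-1) ^+ (b i) * a t i)).
    apply: ler_sum => b _; have [t Pt ->] := hX b.
    rewrite (bigD1 t) //= lerDl; apply: sumr_ge0 => *; exact: expR_ge0.
  rewrite exchange_big /= in B1.
  have B2 : \sum_(t | P t) (2 ^+ m)^-1 * \sum_(b : {ffun 'I_m -> bool})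
      expR (lam * (m%:R^-1 * \sum_(i < m) (-1) ^+ (b i) * a t i)) <= \sum_(t : T) expR Q.
    rewrite big_mkcond /=; apply: ler_sum => t _; case: ifP => Pt; last exact: expR_ge0.
    by apply: avg_exp_bound => //; [exact: ltW | move=> i; exact: hM].
  have sc : \sum_(t : T) expR Q = #|T|%:R * expR Q by rewrite sumr_const mulr_natl.
  rewrite sc in B2.
  have B : expR (lam * mu) <= #|T|%:R * expR Q.
    rewrite e1; apply: (le_trans J'); apply: (le_trans _ B2).
    by rewrite -mulr_sumr ler_wpM2l // invr_ge0 exprn_ge0.
  have hTp : 0 < #|T|%:R :> R by rewrite ltr0n.
  rewrite -[lam * mu]expRK.
  apply: (@le_trans _ _ (ln (#|T|%:R * expR Q))).
    rewrite ler_ln ?posrE ?mulr_gt0 //; exact: expR_gt0.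
  by rewrite (@lnM _ #|T|%:R (expR Q)) ?posrE ?expR_gt0 // expRK lerD2r.
have [M0|Mpos] := eqVneq M 0.
  rewrite M0 mulr0 mul0r; rewrite leNgt; apply/negP => hmu.
  have hl : 0 < 2 * L / mu by rewrite divr_gt0 // mulr_gt0.
  have := step _ hl; rewrite M0 expr0n /= mulr0 mul0r addr0.
  rewrite divfK ?gt_eqF //; lra.
have hMp : 0 < M by rewrite lt_neqAle eq_sym Mpos hM0.
have hm0 : m%:R != 0 :> R by rewrite pnatr_eq0 -lt0n.
have hmp : 0 < m%:R :> R by rewrite ltr0n.
have hs0 : 0 < Num.sqrt (L / m%:R) by rewrite sqrtr_gt0 divr_gt0.
have hs2 : Num.sqrt (L / m%:R) ^+ 2 = L / m%:R by rewrite sqr_sqrtr // ltW // divr_gt0.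
move: hs0 hs2; move: (Num.sqrt _) => s hs0 hs2.
have hLs : L = s ^+ 2 * m%:R by rewrite hs2 mulfVK.
have hl : 0 < s * m%:R / M by rewrite divr_gt0 ?mulr_gt0.
rewrite -(ler_pM2l hl); apply: (le_trans (step _ hl)).
rewrite le_eqVlt; apply/orP; left; apply/eqP; rewrite hLs; field.
by rewrite Mpos hm0.
Qed.

End M.

Lemma L_bound (R : realType) (n k : nat) : (2 <= n)%N ->
  ln ((2 ^ (n * n) * (n * n * n).+1 ^ k)%N%:R : R) + 1 <=
  4 * (n%:R ^+ 2 + k%:R * ln (n%:R)).
Proof.
move=> hn.
have hn2 : (2 : R) <= n%:R by rewrite (ler_nat R 2 n).
have hnp : (0 : R) < n%:R by lra.
have hz : 0 <= ln (n%:R : R) by apply: ln_ge0; lra.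
have hN3 : ((n * n * n).+1 <= n ^ 4)%N.
  have : (2 * (n * n * n) <= n * (n * n * n))%N by rewrite leq_mul2r hn orbT.
  have : (0 < n * n * n)%N by rewrite !muln_gt0 (leq_trans _ hn).
  rewrite (_ : n ^ 4 = n * (n * n * n))%N; last by rewrite !expnS expn0 muln1 !mulnA.
  move: (n * (n * n * n))%N (n * n * n)%N => A B; lia.
have h2 : ln (2 : R) <= 1.
  have h := @le_ln1Dx R 1.
  have e : (1 + 1 : R) = 2 by lra.
  rewrite e in h; apply: h; lra.
have h3 : ln ((n * n * n).+1%:R : R) <= ln (n%:R : R) *+ 4.
  rewrite -lnXn // ler_ln ?posrE ?ltr0n ?exprn_gt0 //.
  by rewrite -natrX ler_nat.
rewrite natrM !natrX lnM ?posrE ?exprn_gt0 ?ltr0n ?expn_gt0 //.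
rewrite !lnXn ?ltr0n //.
rewrite -[ln 2 *+ _]mulr_natl -[ln _ *+ k]mulr_natl natrM -expr2.
rewrite -[ln _ *+ 4]mulr_natl in h3.
have hk : 0 <= k%:R * ln (n%:R : R) by apply: mulr_ge0.
have e4 : k%:R * ln ((n * n * n).+1%:R : R) <= 4 * (k%:R * ln (n%:R : R)).
  rewrite mulrCA; apply: ler_wpM2l => //.
have e5 : (n%:R : R) ^+ 2 * ln 2 <= (n%:R : R) ^+ 2.
  by rewrite -[X in _ <= X]mulr1 ler_wpM2l // sqr_ge0.
have e6 : (1 : R) <= n%:R ^+ 2.
  by rewrite expr2 -[1]mulr1; apply: ler_pM; lra.
lra.
Qed.

Set Implicit Arguments. Unset Strict Implicit. Unset Printing Implicit Defensive.
Section Q.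
Variables (R : realType) (n k : nat).

Definition gbit (g : gate n) (x : basis n) : bool :=
  match g with
  | GZ i => x i
  | GCZ i j => x i && x j
  | GCCZ i j l => [&& x i, x j & x l]
  end.

Lemma gphaseE g x : gphase R g x = (-1) ^+ gbit g x.
Proof. by case: g. Qed.

Definition xb (gs : seq (gate n)) x := foldr (fun g b => gbit g x (+) b) false gs.

Lemma circE gs x y : circ R gs x y = (x == y)%:R * (-1) ^+ xb gs x.
Proof.
elim: gs x y => [|g gs IH] x y /=; first by rewrite /idop mulr1.
rewrite /mmul (bigD1 x) //= big1 => [|z /negbTE hz]; last first.
  by rewrite /gmat eq_sym hz mul0r mul0r.
by rewrite addr0 /gmat eqxx mul1r IH gphaseE signr_addb; ring.
Qed.

Definition tog (c : {ffun 'I_n * 'I_n -> bool}) p := [ffun q => c q (+) (q == p)].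
Definition ev2 (c : {ffun 'I_n * 'I_n -> bool}) (x : basis n) :=
  \big[addb/false]_(p : 'I_n * 'I_n) (c p && (x p.1 && x p.2)).

Lemma ev2_tog c p x : ev2 (tog c p) x = (x p.1 && x p.2) (+) ev2 c x.
Proof.
rewrite /ev2 (eq_bigr (fun q => (c q && (x q.1 && x q.2)) (+) ((q == p) && (x q.1 && x q.2)))).
  rewrite big_split /= addbC; congr (_ (+) _).
  rewrite (bigD1 p) //= eqxx /= big1 ?addbF // => q /negbTE -> //.
by move=> q _; rewrite ffunE; case: (c q); case: (q == p); case: (x q.1 && x q.2).
Qed.

Definition code2 (gs : seq (gate n)) : {ffun 'I_n * 'I_n -> bool} :=
  foldr (fun g c => match g with GZ i => tog c (i, i) | GCZ i j => tog c (i, j)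
                      | GCCZ _ _ _ => c end) [ffun => false] gs.

Definition triple := ('I_n * 'I_n * 'I_n)%type.
Definition cczopt (g : gate n) : option triple :=
  if g is GCCZ i j l then Some (i, j, l) else None.
Definition tbit (t : triple) (x : basis n) := [&& x t.1.1, x t.1.2 & x t.2].
Definition xb3 (L : seq triple) x := foldr (fun t b => tbit t x (+) b) false L.

Lemma ev2_0 x : ev2 [ffun => false] x = false.
Proof. by rewrite /ev2 big1 // => p _; rewrite ffunE. Qed.

Lemma xb_split gs x : xb gs x = ev2 (code2 gs) x (+) xb3 (pmap cczopt gs) x.
Proof.
elim: gs => [|g gs IH] /=; first by rewrite ev2_0.
case: g => [i|i j|i j l] /=; rewrite ?ev2_tog /= ?andbb IH //.
- by rewrite addbA.
- by rewrite addbA.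
- by rewrite /tbit /= addbCA.
Qed.

Lemma size_cczopt gs : size (pmap cczopt gs) = count (@is_ccz n) gs.
Proof. by elim: gs => [|g gs IH] //; case: g => * /=; rewrite IH. Qed.

Definition obit (o : option triple) x := if o is Some t then tbit t x else false.
Definition ev3 kk (c : {ffun 'I_kk -> option triple}) x :=
  \big[addb/false]_(t < kk) obit (c t) x.

Definition code3 kk (L : seq triple) : {ffun 'I_kk -> option triple} :=
  [ffun t : 'I_kk => nth None (map Some L) (val t)].

Lemma ev3_code3 L kk x : (size L <= kk)%N -> ev3 (code3 kk L) x = xb3 L x.
Proof.
elim: L kk => [|t L IH] kk /=.
  by move=> _; rewrite /ev3 big1 // => i _; rewrite ffunE nth_nil.
case: kk => [//|kk] hs.
rewrite /ev3 big_ord_recl ffunE /=; congr (_ (+) _).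
rewrite -(IH kk hs) /ev3; apply: eq_bigr => i _; by rewrite !ffunE.
Qed.

Definition code := ({ffun 'I_n * 'I_n -> bool} * {ffun 'I_k -> option triple})%type.
Definition dmat (c : code) : op R n :=
  fun x y => (x == y)%:R * (-1) ^+ (ev2 c.1 x (+) ev3 c.2 x).
Definition vfun (c : code) := fPhi (uchan (mmul (mmul (@hadn R n) (dmat c)) (@hadn R n))).
Definition codeof gs : code := (code2 gs, code3 k (pmap cczopt gs)).

Lemma circ_code gs : (count (@is_ccz n) gs <= k)%N -> circ R gs = dmat (codeof gs).
Proof.
move=> hk; apply/funext => x; apply/funext => y.
by rewrite circE /dmat /= xb_split ev3_code3 // size_cczopt.
Qed.

Lemma I_CCZ_code Phi : I_CCZ k Phi -> exists c, fPhi Phi = vfun c.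
Proof.
move=> [gs [_ hk ->]]; exists (codeof gs).
by rewrite /vfun circ_code.
Qed.

Lemma card_code : #|{: code}| = (2 ^ (n * n) * (n * n * n).+1 ^ k)%N.
Proof. by rewrite card_prod !card_ffun card_bool card_option !card_prod !card_ord. Qed.

End Q.


Lemma linf_ge0 (R : realType) (T : Type) (m : nat) (S : 'I_m -> T) (f : T -> R) :
  0 <= linf S f.
Proof. by rewrite /linf; elim/big_ind: _ => // x y hx hy; rewrite le_max hx. Qed.

Lemma le_linf (R : realType) (T : Type) (m : nat) (S : 'I_m -> T) (f : T -> R) i :
  `|f (S i)| <= linf S f.
Proof. exact: (le_bigmax 0 (fun i => `|f (S i)|) i). Qed.

Theorem mainTheorem9 (R : realType) :
  exists C : R, forall (n k m : nat) (S : 'I_m -> basis n * basis n),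
    (2 <= n)%N -> (0 < m)%N ->
    rademacher S (Fset (@I_CCZ R n k)) <=
      C * Num.sqrt ((n%:R) ^+ 2 + k%:R * ln (n%:R)) / Num.sqrt (m%:R) *
      sup [set linf S (fPhi Phi) | Phi in @I_CCZ R n k].
Proof.
exists 6 => n k m S hn hm.
pose a := fun (c : code n k) (i : 'I_m) => vfun R c (S i).
pose P : pred (code n k) :=
  fun c => `[< exists Phi, @I_CCZ R n k Phi /\ fPhi Phi = vfun R c >].
pose Y := fun (c : code n k) (b : {ffun 'I_m -> bool}) =>
  m%:R^-1 * \sum_(i < m) (-1) ^+ (b i) * a c i.
pose Phi0 := uchan (mmul (mmul (@hadn R n) (circ R [::])) (@hadn R n)).
have hPhi0 : @I_CCZ R n k Phi0 by exists [::].
have [c0 hc0] := I_CCZ_code hPhi0.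
have Pc0 : P c0 by apply/asboolP; exists Phi0.
pose X := fun b => Y ([arg max_(c > c0 | P c) Y c b]%O) b.
set Msup := sup _.
have hbd : has_ubound [set linf S (fPhi Phi) | Phi in @I_CCZ R n k].
  exists (\sum_(c : code n k) linf S (vfun R c)) => y [Phi hPhi <-].
  have [c ->] := I_CCZ_code hPhi.
  rewrite (bigD1 c) //= lerDl; apply: sumr_ge0 => *; exact: linf_ge0.
have hub : forall c i, P c -> `|a c i| <= Msup.
  move=> c i /asboolP [Phi [hPhi hf]].
  apply: (le_trans _ (ub_le_sup hbd _)); last by exists Phi.
  by rewrite /a -hf; exact: le_linf.
have hMs : 0 <= Msup by apply: le_trans (hub c0 (Ordinal hm) Pc0).
have hsup : forall b : {ffun 'I_m -> bool},
    sup [set m%:R^-1 * \sum_(i < m) (-1) ^+ (b i) * g (S i) | g in Fset (@I_CCZ R n k)]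
    <= X b.
  move=> b; apply: ge_sup.
    exists (m%:R^-1 * \sum_(i < m) (-1) ^+ (b i) * fPhi Phi0 (S i)).
    by exists (fPhi Phi0) => //; exists Phi0.
  move=> y [g [Phi hPhi ->] <-].
  have [c hc] := I_CCZ_code hPhi.
  have Pc : P c by apply/asboolP; exists Phi.
  rewrite /X; case: arg_maxP => // c' _ hmax.
  by rewrite hc; exact: (hmax c Pc).
have hX : forall b : {ffun 'I_m -> bool}, exists2 c, P c &
    X b = m%:R^-1 * \sum_(i < m) (-1) ^+ (b i) * a c i.
  by move=> b; rewrite /X; case: arg_maxP => // c' Pc' _; exists c'.
set L := ln (#|{: code n k}|%:R : R) + 1.
have hL : ln (#|{: code n k}|%:R : R) <= L by rewrite /L lerDl.
have hT0 : (0 : R) <= ln (#|{: code n k}|%:R : R).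
  apply: ln_ge0; rewrite (ler_nat R 1); apply/card_gt0P; by exists c0.
have hL0 : 0 < L by rewrite /L; lra.
have M := @massart R m _ P a X Msup L hm (fun c i Pc => hub c i Pc) hX hL hL0.
have hR : rademacher S (Fset (@I_CCZ R n k)) <=
    (2 ^+ m)^-1 * \sum_(b : {ffun 'I_m -> bool}) X b.
  rewrite /rademacher ler_wpM2l ?invr_ge0 ?exprn_ge0 //.
  by apply: ler_sum => b _; exact: hsup.
apply: (le_trans hR); apply: (le_trans M).
set Z := (n%:R ^+ 2 + k%:R * ln (n%:R : R)).
have hLZ : L <= 4 * Z by rewrite /L card_code; exact: L_bound.
have hsL : Num.sqrt L <= 2 * Num.sqrt Z.
  have -> : (2 : R) = Num.sqrt 4.
    by rewrite (_ : (4 : R) = 2 ^+ 2) ?sqrtr_sqr ?ger0_norm //; ring.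
  rewrite -sqrtrM // ler_sqrt //; apply: mulr_ge0 => //; lra.
have hm0 : 0 <= m%:R :> R by [].
rewrite (sqrtrM _ (ltW hL0)) sqrtrV //.
set sm := (Num.sqrt (m%:R))^-1.
have hsm : 0 <= sm by rewrite /sm invr_ge0 sqrtr_ge0.
have -> : 3 * Msup * (Num.sqrt L * sm) = (3 * Num.sqrt L) * (Msup * sm) by ring.
have -> : 6 * Num.sqrt Z / Num.sqrt m%:R * Msup = (6 * Num.sqrt Z) * (Msup * sm)
  by rewrite /sm; ring.
apply: ler_wpM2r; first exact: mulr_ge0.
lra.
Qed.
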